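(* Let $R$ be an associative ring with identity, let $\mathscr{X}$ be a class of left $R$-modules, and let $n\geq 1$ be an integer such that $\mathscr{X}_n$ is nonempty. Then $R$ is left $n$-$\mathscr{X}$-coherent if and only if every right $R$-module has an $n$-$\mathscr{X}$-flat preenvelope.
   Context: A module $M$ is $m$-presented if there is an exact sequence $F_m\to\cdots\to F_0\to M\to 0$ with each $F_i$ finitely generated free. $\mathscr{X}_n$ denotes the class of $n$-presented modules in $\mathscr{X}$. $R$ is left $n$-$\mathscr{X}$-coherent if $\mathscr{X}_n\neq\emptyset$ and every module in $\mathscr{X}_n$ is $(n+1)$-presented. A right $R$-module $M$ is $n$-$\mathscr{X}$-flat if $\mathrm{Tor}^R_n(M,N)=0$ for all $N\in\mathscr{X}_n$. An $n$-$\mathscr{X}$-flat preenvelope of a right module $M$ is a homomorphism $\varphi:M\to F$ with $F$ an $n$-$\mathscr{X}$-flat right module such that for every homomorphism $\varphi':M\to F'$ with $F'$ $n$-$\mathscr{X}$-flat there exists $f:F\to F'$ with $\varphi'=f\varphi$. *)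

(* Defs.v *)
From HB Require Import structures.
From mathcomp Require Import all_boot all_order all_algebra.
Set Implicit Arguments. Unset Strict Implicit. Unset Printing Implicit Defensive.
Import GRing.Theory.
Local Open Scope ring_scope.

(* Conventions.
   - R : pzRingType is an associative ring with identity.
   - A left R-module is an [lmodType R]; a right R-module is an
     [lmodType R^c] (scaling [r *: m] in [R^c] is the right action m.r).
   - The finitely generated free left module R^k is the row space 'rV[R]_k
     (left action: entrywise left multiplication); a left-linear map
     R^a -> R^b is right multiplication [v |-> v *m A] by A : 'M[R]_(a,b);
     a linear map R^k -> N is [v |-> \sum_j v 0 j *: g j] for generators g. *)

(* An m-presentation  F_m -> ... -> F_1 -> F_0 -> N -> 0  of a left module N,
   with F_i = R^(k i), the map F_(i+1) -> F_i given by A i, exact at N and at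
   F_0, ..., F_(m-1). *)
Record presentation (R : pzRingType) (N : lmodType R) (m : nat) := Presentation {
  pres_k : nat -> nat;
  pres_A : forall i : nat, 'M[R]_(pres_k i.+1, pres_k i);
  pres_g : 'I_(pres_k 0) -> N;
  pres_surj : forall y : N, exists v : 'rV[R]_(pres_k 0),
      y = \sum_j v 0 j *: pres_g j;
  pres_exact0 : (0 < m)%N -> forall v : 'rV[R]_(pres_k 0),
      (\sum_j v 0 j *: pres_g j = 0) <-> exists w, v = w *m pres_A 0;
  pres_exact : forall i : nat, (i.+2 <= m)%N -> forall v : 'rV[R]_(pres_k i.+1),
      (v *m pres_A i = 0) <-> exists w, v = w *m pres_A i.+1
}.

Definition n_presented (R : pzRingType) (N : lmodType R) (m : nat) : Prop :=
  inhabited (presentation N m).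

Definition in_Xn (R : pzRingType) (X : lmodType R -> Prop) (n : nat)
  (N : lmodType R) : Prop := X N /\ n_presented N n.

Definition left_n_X_coherent (R : pzRingType) (X : lmodType R -> Prop)
  (n : nat) : Prop :=
  (exists N : lmodType R, in_Xn X n N) /\
  forall N : lmodType R, in_Xn X n N -> n_presented N n.+1.

(* Tor_n^R(M, N) = 0 for n >= 1, a right module M and a left module N given
   with an n-presentation P, computed as the n-th homology of M (x) F_*, where
   F_* is the free resolution  ... -> F_(n+1) -> F_n -> ... -> F_0 -> N
   extending P by F_(n+1) = free module on K = ker(F_n -> F_(n-1)).
   Under M (x) R^k = M^k, the map M (x) F_n -> M (x) F_(n-1) sends
   x to (j |-> \sum_l x_l . A_(l j)), and the image of M (x) F_(n+1) in
   M (x) F_n = M^k is the additive span of the elements (l |-> m . a_l),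
   m in M, a in K.  (Only meaningful for n >= 1, where F_n = R^(k (n.-1).+1).) *)
Definition Tor_vanishes (R : pzRingType) (n : nat) (M : lmodType R^c)
  (N : lmodType R) (P : presentation N n) : Prop :=
  let k := pres_k P in let A := pres_A P in
  forall x : 'I_(k n.-1.+1) -> M,
    (forall j : 'I_(k n.-1), \sum_l ((A n.-1 l j : R^c) *: x l) = 0) ->
    exists s : seq (M * 'rV[R]_(k n.-1.+1)),
      (forall t, t \in s -> t.2 *m A n.-1 = 0) /\
      forall l, x l = \sum_(t <- s) ((t.2 0 l : R^c) *: t.1).

(* A right module M is n-X-flat: Tor_n(M, N) = 0 for all N in X_n
   (for every n-presentation of N; Tor does not depend on it). *)
Definition n_X_flat (R : pzRingType) (X : lmodType R -> Prop) (n : nat)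
  (M : lmodType R^c) : Prop :=
  forall N : lmodType R, forall P : presentation N n, X N -> Tor_vanishes M P.

Definition n_X_flat_preenvelope (R : pzRingType) (X : lmodType R -> Prop)
  (n : nat) (M F : lmodType R^c) (phi : {linear M -> F}) : Prop :=
  n_X_flat X n F /\
  forall (F' : lmodType R^c) (phi' : {linear M -> F'}), n_X_flat X n F' ->
    exists f : {linear F -> F'}, forall x : M, phi' x = f (phi x).

Definition has_n_X_flat_preenvelope (R : pzRingType) (X : lmodType R -> Prop)
  (n : nat) (M : lmodType R^c) : Prop :=
  exists (F : lmodType R^c) (phi : {linear M -> F}),
    n_X_flat_preenvelope X n phi.

(* Main.v *)
Require Import Defs.
From HB Require Import structures.
From mathcomp Require Import all_boot all_order all_algebra.
From mathcomp Require Import boolp functions.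
Require Import Defs.
Set Implicit Arguments. Unset Strict Implicit. Unset Printing Implicit Defensive.
Import GRing.Theory.
Local Open Scope ring_scope.

Lemma sum_mul_gen (R : pzRingType) (N : lmodType R) a b p
  (g1 : 'I_a -> N) (g2 : 'I_b -> N) (f : 'M[R]_(a, b)) (X : 'M[R]_(p, a)) r :
  (forall j, g1 j = \sum_l f j l *: g2 l) ->
  \sum_l (X *m f) r l *: g2 l = \sum_j X r j *: g1 j.
Proof.
move=> hg.
under eq_bigr => l _ do rewrite mxE scaler_suml.
rewrite exchange_big /=; apply: eq_bigr => j _.
by rewrite hg scaler_sumr; apply: eq_bigr => l _; rewrite scalerA.
Qed.

Lemma sum_one (R : pzRingType) (N : lmodType R) a (g : 'I_a -> N) r :
  \sum_l (1%:M : 'M[R]_a) r l *: g l = g r.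
Proof.
rewrite (bigD1 r) //= big1 ?addr0; first by rewrite mxE eqxx scale1r.
by move=> l /negbTE nl; rewrite mxE eq_sym nl scale0r.
Qed.

Section Pres.
Variables (R : pzRingType) (N : lmodType R) (m : nat) (P : presentation N m).
Local Notation k := (pres_k P).
Local Notation A := (pres_A P).
Local Notation g := (@pres_g _ _ _ P).

Definition cyc (i : nat) (p : nat) : 'M[R]_(p, k i) -> Prop :=
  match i return 'M[R]_(p, k i) -> Prop with
  | 0 => fun X => forall r, \sum_j X r j *: g j = 0
  | j.+1 => fun X => X *m A j = 0
  end.

Lemma cyc_mull i p q (Z : 'M[R]_(q, p)) X : @cyc i p X -> cyc (Z *m X).
Proof.
case: i X => [|j] X /= h.
  move=> r; rewrite (sum_mul_gen (g1 := fun s => \sum_j X s j *: g j) (g2 := g)) //.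
  by rewrite big1 // => s _; rewrite h scaler0.
by rewrite -mulmxA h mulmx0.
Qed.

Lemma cyc_row i p (X : 'M[R]_(p, k i)) : cyc X <-> forall r, cyc (row r X).
Proof.
case: i X => [|j] X /=; split.
- by move=> h r r0; under eq_bigr do rewrite mxE; exact: h.
- by move=> h r; have := h r ord0; under eq_bigr do rewrite mxE.
- by move=> h r; rewrite -row_mul h; apply/rowP => l; rewrite !mxE.
- by move=> h; apply/row_matrixP => r; rewrite row_mul h; apply/rowP => l; rewrite !mxE.
Qed.

Lemma cyc_lift_row i (v : 'rV[R]_(k i)) : cyc v -> (i < m)%N ->
  exists w : 'rV[R]_(k i.+1), v = w *m A i.
Proof.
case: i v => [|j] v /= h hm.
  by apply/(@pres_exact0 _ _ _ P hm); have := h ord0.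
by apply/(@pres_exact _ _ _ P _ hm).
Qed.

Lemma cyc_lift i p (X : 'M[R]_(p, k i)) : cyc X -> (i < m)%N ->
  exists Y : 'M[R]_(p, k i.+1), X = Y *m A i.
Proof.
move=> /cyc_row h hm.
have [w hw] := fin_all_exists (fun r => cyc_lift_row (h r) hm).
exists (\matrix_r w r); apply/row_matrixP => r.
by rewrite row_mul rowK -hw.
Qed.

Lemma cycA i : (i < m)%N -> cyc (A i).
Proof.
move=> hm; apply/cyc_row => r; rewrite rowE.
case: i hm r => [|j] hm r /=.
  move=> r0; have := (proj2 (@pres_exact0 _ _ _ P hm (delta_mx 0 r *m A 0))).
  move=> /(_ (ex_intro _ _ erefl)) H.
  rewrite -[in RHS]H; apply: eq_bigr => l _; rewrite (ord1 r0) !mxE.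
  by congr (_ *: _); apply: eq_bigr => s _; rewrite !mxE.
by apply/(@pres_exact _ _ _ P _ hm); exists (delta_mx 0 r).
Qed.

End Pres.
Section Compare.
Variables (R : pzRingType) (N : lmodType R) (m1 m2 : nat)
  (P : presentation N m1) (Q : presentation N m2).
Local Notation kP := (pres_k P).
Local Notation kQ := (pres_k Q).
Local Notation AP := (pres_A P).
Local Notation AQ := (pres_A Q).

Definition ChainF i (f : 'M[R]_(kP i, kQ i)) :=
  forall p (X : 'M[R]_(p, kP i)), cyc X -> cyc (X *m f).
Definition ChainG i (f : 'M[R]_(kQ i, kP i)) :=
  forall p (X : 'M[R]_(p, kQ i)), cyc X -> cyc (X *m f).

Definition Inv i := exists (f : 'M[R]_(kP i, kQ i)) (g : 'M[R]_(kQ i, kP i))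
  (E : 'M[R]_(kP i, kP i)), [/\ ChainF f, ChainG g, cyc E &
    forall p (X : 'M[R]_(p, kP i)), cyc X -> X *m E = X - X *m f *m g].

Lemma gen_lift (P1 : presentation N m1) (Q1 : presentation N m2) :
  exists f : 'M[R]_(pres_k P1 0, pres_k Q1 0),
    forall j, @pres_g _ _ _ P1 j = \sum_l f j l *: @pres_g _ _ _ Q1 l.
Proof.
have [w hw] := fin_all_exists (fun j => pres_surj Q1 (@pres_g _ _ _ P1 j)).
by exists (\matrix_j w j) => j; rewrite hw; apply: eq_bigr => l _; rewrite !mxE.
Qed.

Lemma Inv0 : Inv 0.
Proof.
have [f hf] := gen_lift P Q.
have [g hg] : exists g : 'M[R]_(kQ 0, kP 0),
    forall j, @pres_g _ _ _ Q j = \sum_l g j l *: @pres_g _ _ _ P l.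
  have [w hw] := fin_all_exists (fun j => pres_surj P (@pres_g _ _ _ Q j)).
  by exists (\matrix_j w j) => j; rewrite hw; apply: eq_bigr => l _; rewrite !mxE.
exists f, g, (1%:M - f *m g); split.
- move=> p X /= hX r; rewrite (sum_mul_gen (g1 := @pres_g _ _ _ P)) //.
- move=> p X /= hX r; rewrite (sum_mul_gen (g1 := @pres_g _ _ _ Q)) //.
- move=> r /=.
  have -> : \sum_j (1%:M - f *m g) r j *: @pres_g _ _ _ P j =
     \sum_j (1%:M : 'M[R]_(kP 0)) r j *: @pres_g _ _ _ P j - \sum_j (f *m g) r j *: @pres_g _ _ _ P j.
    rewrite -sumrB; apply: eq_bigr => j _; rewrite -scalerBl; congr (_ *: _).
    by rewrite !mxE.
  rewrite sum_one (sum_mul_gen (g1 := @pres_g _ _ _ Q)) //.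
  by rewrite -hf subrr.
- by move=> p X _; rewrite mulmxBr mulmx1 mulmxA.
Qed.

Lemma InvS i : Inv i -> (i < m1)%N -> (i < m2)%N -> Inv i.+1.
Proof.
move=> [f [g [E [hf hg hE hX]]]] h1 h2.
have [h Eh] := cyc_lift hE h1.
have [f' hf'] := cyc_lift (hf _ _ (cycA P h1)) h2.
have [g' hg'] := cyc_lift (hg _ _ (cycA Q h2)) h1.
exists f', g', (1%:M - f' *m g' - AP i *m h); split.
- by move=> p X /= hX0; rewrite -mulmxA -hf' mulmxA hX0 mul0mx.
- by move=> p X /= hX0; rewrite -mulmxA -hg' mulmxA hX0 mul0mx.
- rewrite /= !mulmxBl mul1mx -!mulmxA -hg' -Eh !mulmxA -hf'.
  rewrite (hX _ _ (cycA P h1)).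
  by rewrite subrr.
- move=> p X /= hX0; rewrite !mulmxBr mulmx1 !mulmxA hX0 mul0mx subr0.
  by [].
Qed.

Lemma InvN i : (i <= m1)%N -> (m1 <= m2)%N -> Inv i.
Proof.
elim: i => [|i IH] h1 h2; first exact: Inv0.
apply: InvS; first exact: IH (ltnW h1) h2.
  exact: h1.
exact: leq_trans h1 h2.
Qed.

End Compare.

Lemma compare_fg (R : pzRingType) (N : lmodType R) (m : nat)
  (P : presentation N m.+1) (Q : presentation N m.+2) :
  exists c (B : 'M[R]_(c, pres_k P m.+1)), forall v : 'rV[R]_(pres_k P m.+1),
    v *m pres_A P m = 0 <-> exists w, v = w *m B.
Proof.
have [f [g [E [hf hg hE hX]]]] := @InvN _ _ _ _ P Q m.+1 (leqnn _) (leqnSn _).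
exists (pres_k P m.+1 + pres_k Q m.+2)%N, (col_mx E (pres_A Q m.+1 *m g)) => v.
split.
  move=> hv.
  have [w' hw'] := cyc_lift (hf _ v hv) (ltnSn _).
  exists (row_mx v w'); rewrite mul_row_col mulmxA -hw' -mulmxA.
  by rewrite (hX _ v hv) mulmxA addrNK.
move=> [w ->]; rewrite -mulmxA mul_col_mx.
have h1 : E *m pres_A P m = 0 := hE.
have h2 : pres_A Q m.+1 *m g *m pres_A P m = 0 := hg _ _ (cycA Q (ltnSn _)).
by rewrite h1 h2 col_mx0 mulmx0.
Qed.
Definition getm (R : pzRingType) p q (M : 'M[R]_(p, q)) (r s : nat) : R :=
  match (insub r : option 'I_p), (insub s : option 'I_q) with
  | Some r', Some s' => M r' s'
  | _, _ => 0
  end.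

Lemma getmE (R : pzRingType) p q (M : 'M[R]_(p, q)) (r : 'I_p) (s : 'I_q) :
  getm M r s = M r s.
Proof. by rewrite /getm !valK. Qed.

Lemma get_mulmx (R : pzRingType) p p' q q' (e1 : p' = p) (e2 : q' = q)
  (M : 'M[R]_(p, q)) (M' : 'M[R]_(p', q')) :
  (forall (r : 'I_p') (s : 'I_q'), M' r s = getm M r s) ->
  forall v : 'rV[R]_p',
    v *m M' = castmx (erefl, esym e2) (castmx (erefl, e1) v *m M).
Proof.
subst p' q' => hM v; rewrite !castmx_id; congr (_ *m _).
by apply/matrixP => r s; rewrite hM getmE.
Qed.

Lemma castmx_eq0 (R : pzRingType) a b a' b' (e : (a = a') * (b = b'))
  (M : 'M[R]_(a, b)) : castmx e M = 0 <-> M = 0.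
Proof.
case: e => e1 e2; subst a' b'; by rewrite castmx_id.
Qed.

Lemma rcastK (R : pzRingType) a b (e : a = b) (v : 'rV[R]_a) :
  castmx (erefl 1%N, esym e) (castmx (erefl 1%N, e) v) = v.
Proof. by case: b / e; rewrite !castmx_id. Qed.

Lemma rcastKV (R : pzRingType) a b (e : a = b) (v : 'rV[R]_b) :
  castmx (erefl 1%N, e) (castmx (erefl 1%N, esym e) v) = v.
Proof. by case: b / e v => v; rewrite !castmx_id. Qed.

Lemma rcastKV2 (R : pzRingType) a b (e e' : a = b) (v : 'rV[R]_b) :
  castmx (erefl 1%N, e) (castmx (erefl 1%N, esym e') v) = v.
Proof. by rewrite (eq_irrelevance e' e) rcastKV. Qed.

Lemma rcastK2 (R : pzRingType) a b (e e' : a = b) (v : 'rV[R]_a) :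
  castmx (erefl 1%N, esym e') (castmx (erefl 1%N, e) v) = v.
Proof. by rewrite (eq_irrelevance e' e) rcastK. Qed.

Section Splice.
Variables (R : pzRingType) (N : lmodType R) (m : nat) (P : presentation N m.+1)
  (c : nat) (B : 'M[R]_(c, pres_k P m.+1))
  (hB : forall v : 'rV[R]_(pres_k P m.+1),
    v *m pres_A P m = 0 <-> exists w, v = w *m B).
Local Notation k := (pres_k P).
Local Notation A := (pres_A P).

Definition k' i := if (i <= m.+1)%N then k i else c.
Definition A' i : 'M[R]_(k' i.+1, k' i) := \matrix_(r, s)
  (if (i <= m)%N then getm (A i) r s else if i == m.+1 then getm B r s else 0).

Lemma ek' i : (i <= m.+1)%N -> k' i = k i.
Proof. by rewrite /k' => ->. Qed.

Lemma ekc : k' m.+2 = c.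
Proof. by rewrite /k' ltnn. Qed.

Lemma A'E i (hi : (i <= m)%N) (v : 'rV[R]_(k' i.+1)) :
  v *m A' i = castmx (erefl, esym (ek' (leqW hi)))
     (castmx (erefl, ek' (i:=i.+1) hi) v *m A i).
Proof. by apply: get_mulmx => r s; rewrite mxE hi. Qed.

Lemma A'mE (v : 'rV[R]_(k' m.+2)) :
  v *m A' m.+1 = castmx (erefl, esym (ek' (leqnn m.+1)))
     (castmx (erefl, ekc) v *m B).
Proof. by apply: get_mulmx => r s; rewrite mxE ltnn eqxx. Qed.

Lemma splice_exact i (hi : (i.+2 <= m.+2)%N) (v : 'rV[R]_(k' i.+1)) :
  v *m A' i = 0 <-> exists w, v = w *m A' i.+1.
Proof.
have hi' : (i <= m)%N by [].
rewrite A'E castmx_eq0.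
set v1 := castmx _ v.
have ev : forall e w1, v = castmx (erefl, esym e) w1 <-> v1 = w1.
  move=> e w1; have -> : e = ek' (i:=i.+1) hi' by apply: eq_irrelevance.
  rewrite /v1; split => [hv|<-]; first by rewrite hv rcastKV.
  by rewrite rcastK.
have [lim|mli] := boolP (i < m)%N.
- rewrite (@pres_exact _ _ _ P _ lim); split => -[w1 hw].
    exists (castmx (erefl, esym (ek' (i:=i.+2) lim)) w1).
    rewrite (A'E (i:=i.+1) lim); apply/ev.
    by rewrite rcastKV2.
  exists (castmx (erefl, ek' (i:=i.+2) lim) w1).
  by move: hw; rewrite (A'E (i:=i.+1) lim) => /ev ->.
- have eim : i = m by apply/eqP; rewrite eqn_leq hi' leqNgt mli.
  subst i.
  rewrite hB; split => -[w1 hw].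
    exists (castmx (erefl, esym ekc) w1).
    rewrite A'mE; apply/ev.
    by rewrite rcastKV2.
  exists (castmx (erefl, ekc) w1).
  by move: hw; rewrite A'mE => /ev ->.
Qed.

Lemma splice_exact0 (h : (0 < m.+2)%N) (v : 'rV[R]_(k' 0)) :
  (\sum_j v 0 j *: @pres_g _ _ _ P j = 0) <-> exists w, v = w *m A' 0.
Proof.
rewrite (@pres_exact0 _ _ _ P (ltn0Sn _)).
have e0 : k' 0 = k 0 by [].
have e1 : k' 1 = k 1 by [].
split => -[w hw].
  exists (castmx (erefl, esym (ek' (i:=1) (leq0n m))) w).
  rewrite (A'E (i:=0) (leq0n m)) rcastKV2 hw.
  by apply/matrixP => a b; rewrite castmxE /= !cast_ord_id.
exists (castmx (erefl, (ek' (i:=1) (leq0n m))) w).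
rewrite hw (A'E (i:=0) (leq0n m)).
by apply/matrixP => a b; rewrite castmxE /= !cast_ord_id.
Qed.

Definition splice : presentation N m.+2 :=
  @Presentation R N m.+2 k' A' (@pres_g _ _ _ P) (pres_surj P)
    splice_exact0 splice_exact.

End Splice.
Section Backward.
Variables (R : pzRingType) (X : lmodType R -> Prop) (n : nat).

Lemma regular_flat : n_X_flat X n (R^c^o).
Proof.
move=> N P _; rewrite /Tor_vanishes /= => x hx.
set A := pres_A P (n.-1).
exists [:: (1 : R^c^o, \row_l (x l : R))]; split.
  move=> t; rewrite inE => /eqP -> /=; apply/rowP => j; rewrite !mxE.
  under eq_bigr do rewrite mxE.
  exact: hx j.
by move=> l; rewrite big_seq1 /= mxE; exact: (esym (mulr1 (x l : R^c))).
Qed.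

Lemma retract_flat (M F : lmodType R^c) (phi : {linear M -> F})
  (g : {linear F -> M}) : n_X_flat X n F -> (forall x, g (phi x) = x) ->
  n_X_flat X n M.
Proof.
move=> hF hg N P hN; rewrite /Tor_vanishes /= => x hx.
have hc : forall j, \sum_l ((pres_A P n.-1 l j : R^c) *: phi (x l)) = 0.
  move=> j; rewrite -[RHS](linear0 phi) -(hx j) linear_sum.
  by apply: eq_bigr => l _; rewrite linearZ.
have [s [hs1 hs2]] := hF N P hN (fun l => phi (x l)) hc.
exists [seq (g t.1, t.2) | t <- s]; split.
  by move=> t /mapP [u us ht]; rewrite ht; exact: hs1.
move=> l; rewrite -[x l]hg hs2 linear_sum big_map; apply: eq_bigr => t _.
by rewrite linearZ.
Qed.

End Backward.
Section BackMain.
Variables (R : pzRingType) (X : lmodType R -> Prop) (m : nat) (N : lmodType R)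
  (P : presentation N m.+1).

Definition KP := {a : 'rV[R]_(pres_k P m.+1) | a *m pres_A P m = 0}.

Definition proj_at (a : KP) (f : KP -> R^c^o) : R^c^o := f a.
Lemma proj_at_lin a : linear_for *:%R (proj_at a).
Proof. by []. Qed.
HB.instance Definition _ a := GRing.isLinear.Build R^c (KP -> R^c^o) R^c^o *:%R
  (proj_at a) (proj_at_lin a).

Variable F : lmodType R^c.
Definition gather (fam : KP -> {linear F -> R^c^o}) (y : F) : KP -> R^c^o :=
  fun a => fam a y.
Lemma gather_lin fam : linear_for *:%R (gather fam).
Proof.
move=> r u v; apply: funext => a /=; rewrite /gather /=.
by rewrite linearD linearZ.
Qed.
HB.instance Definition _ fam := GRing.isLinear.Build R^c F (KP -> R^c^o) *:%R
  (gather fam) (gather_lin fam).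

End BackMain.

Lemma back_main (R : pzRingType) (X : lmodType R -> Prop) (m : nat)
  (N : lmodType R) (P : presentation N m.+1) : X N ->
  (forall M : lmodType R^c, has_n_X_flat_preenvelope X m.+1 M) ->
  n_presented N m.+2.
Proof.
move=> hXN H.
have [F [phi [hF huniv]]] := H (KP P -> R^c^o).
have hfam : forall a, exists f : {linear F -> R^c^o},
    forall x, proj_at a x = f (phi x).
  by move=> a; apply: huniv; exact: regular_flat.
have [fam hfam'] := choice hfam.
have hMK : n_X_flat X m.+1 (KP P -> R^c^o).
  apply: (retract_flat (phi := phi) (g := gather fam)) => //.
  by move=> x; apply: funext => a; rewrite /= /gather -hfam'.
set A := pres_A P m.
pose x := fun l => (fun a : KP P => (sval a 0 l : R^c^o)).
have hc : forall j, \sum_l ((A l j : R^c) *: x l) = 0.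
  move=> j; apply: funext => a.
  have h0 : (sval a *m A) 0 j = 0 by rewrite (svalP a) mxE.
  transitivity (\sum_i ((A i j : R^c) *: x i a)).
    by elim/big_rec2: _ => // i y1 y2 _ <-.
  apply: (etrans _ h0); rewrite mxE.
  by apply: eq_bigr.
have [s [hs1 hs2]] := hMK N P hXN x hc.
have key : forall a : KP P, sval a = \sum_(t <- s) ((t.1 a : R) *: t.2).
  move=> a; apply/rowP => l; rewrite summxE.
  have e := congr1 (fun f => f a) (hs2 l).
  transitivity ((\sum_(t <- s) ((t.2 0 l : R^c) *: t.1)) a); first exact: e.
  by elim/big_rec2: _ => // t y1 y2 _ <-; rewrite mxE.
pose B := \matrix_(i < size s) (nth (0, 0) s i).2.
have hB : forall v : 'rV[R]_(pres_k P m.+1),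
    v *m pres_A P m = 0 <-> exists w, v = w *m B.
  move=> v; split => [hv|[w ->]].
    exists (\row_i ((nth (0, 0) s i).1 (exist _ v hv) : R)).
    rewrite mulmx_sum_row [LHS](key (exist _ v hv)) /= (big_nth (0, 0)) big_mkord.
    by apply: eq_bigr => i _; rewrite rowK mxE.
  rewrite -mulmxA; suff -> : B *m pres_A P m = 0 by rewrite mulmx0.
    apply/row_matrixP => i; rewrite row_mul rowK row0; apply: hs1.
    exact: mem_nth.
by constructor; exact: (splice hB).
Qed.
Section TermModel.
Variables (R : pzRingType) (X : lmodType R -> Prop) (m : nat) (M : lmodType R^c).

Definition valid a b c (A : 'M[R]_(a, b)) (B : 'M[R]_(c, a)) : Prop :=
  forall (F' : lmodType R^c), n_X_flat X m.+1 F' -> forall x : 'I_a -> F',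
  (forall j, \sum_l ((A l j : R^c) *: x l) = 0) ->
  exists y : 'I_c -> F', forall l, x l = \sum_u ((B u l : R^c) *: y u).

Inductive gen : Type :=
| GM : M -> gen
| GW : forall a b c, 'M[R]_(a, b) -> 'M[R]_(c, a) ->
    ('I_a -> seq (R^c * gen)) -> 'I_c -> gen.

Definition term := seq (R^c * gen).

Definition eval (F' : lmodType R^c) (v : gen -> F') (t : term) : F' :=
  \sum_(p <- t) p.1 *: v p.2.

Definition model (F' : lmodType R^c) (v : gen -> F') : Prop :=
  [/\ (forall x y, v (GM (x + y)) = v (GM x) + v (GM y)),
      (forall r x, v (GM (r *: x)) = r *: v (GM x)) &
      (forall a b c (A : 'M[R]_(a, b)) (B : 'M[R]_(c, a)) (xs : 'I_a -> term),
        valid A B -> (forall j, \sum_l ((A l j : R^c) *: eval v (xs l)) = 0) ->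
        forall l, eval v (xs l) = \sum_u ((B u l : R^c) *: v (GW A B xs u)))].

Definition equiv (t1 t2 : term) : Prop :=
  forall (F' : lmodType R^c) (v : gen -> F'), model v -> eval v t1 = eval v t2.

Lemma equiv_sym t1 t2 : equiv t1 t2 -> equiv t2 t1.
Proof. by move=> h F' v hv; rewrite (h F' v hv). Qed.
Lemma equiv_trans t1 t2 t3 : equiv t1 t2 -> equiv t2 t3 -> equiv t1 t3.
Proof. by move=> h1 h2 F' v hv; rewrite (h1 F' v hv) (h2 F' v hv). Qed.

Definition FQ := {P : term -> Prop | exists t, P = equiv t}.
HB.instance Definition _ := gen_eqMixin FQ.
HB.instance Definition _ := gen_choiceMixin FQ.

Definition mk (t : term) : FQ := exist _ (equiv t) (ex_intro _ t erefl).
Definition rep (f : FQ) : term := sval (cid (svalP f)).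

Lemma repK f : mk (rep f) = f.
Proof.
rewrite /rep; case: (cid _) => t ht /=; case: f ht => P hP /= ht.
by subst P; rewrite /mk; congr exist.
Qed.

Lemma mk_eq t1 t2 : equiv t1 t2 -> mk t1 = mk t2.
Proof.
move=> h; rewrite /mk.
have e : equiv t1 = equiv t2.
  apply: funext => t; apply: propext; split.
    by move=> h1; apply: equiv_trans (equiv_sym h) h1.
  by move=> h2; apply: equiv_trans h h2.
by move: (ex_intro _ t1 _); rewrite e => ?; congr exist.
Qed.

Lemma mk_inj t1 t2 : mk t1 = mk t2 -> equiv t1 t2.
Proof.
move=> /(congr1 sval) /= e.
have : equiv t2 t2 by [].
by rewrite -e.
Qed.

Definition sem (F' : lmodType R^c) (v : gen -> F') (f : FQ) : F' := eval v (rep f).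

Lemma sem_mk (F' : lmodType R^c) (v : gen -> F') t : model v -> sem v (mk t) = eval v t.
Proof.
move=> hv; rewrite /sem; apply: (mk_inj (repK (mk t))); exact: hv.
Qed.

Lemma FQ_ext f g :
  (forall (F' : lmodType R^c) (v : gen -> F'), model v -> sem v f = sem v g) -> f = g.
Proof. by move=> h; rewrite -(repK f) -(repK g); apply: mk_eq. Qed.

Lemma eval_cat (F' : lmodType R^c) (v : gen -> F') s1 s2 : eval v (s1 ++ s2) = eval v s1 + eval v s2.
Proof. by rewrite /eval big_cat. Qed.
Lemma eval_nil (F' : lmodType R^c) (v : gen -> F') : eval v [::] = 0.
Proof. by rewrite /eval big_nil. Qed.
Lemma eval_opp (F' : lmodType R^c) (v : gen -> F') t :
  eval v [seq (- p.1, p.2) | p <- t] = - eval v t.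
Proof.
rewrite /eval big_map -sumrN; apply: eq_bigr => p _ /=; exact: scaleNr.
Qed.
Lemma eval_scale (F' : lmodType R^c) (v : gen -> F') (r : R^c) t :
  eval v [seq (r * p.1, p.2) | p <- t] = r *: eval v t.
Proof.
rewrite /eval big_map scaler_sumr; apply: eq_bigr => p _ /=; by rewrite scalerA.
Qed.

Definition zeroQ : FQ := mk [::].
Definition addQ (f g : FQ) : FQ := mk (rep f ++ rep g).
Definition oppQ (f : FQ) : FQ := mk [seq (- p.1, p.2) | p <- rep f].
Definition scaleQ (r : R^c) (f : FQ) : FQ := mk [seq (r * p.1, p.2) | p <- rep f].

Lemma sem_zero (F' : lmodType R^c) (v : gen -> F') : model v -> sem v zeroQ = 0.
Proof. by move=> hv; rewrite sem_mk // eval_nil. Qed.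
Lemma sem_add (F' : lmodType R^c) (v : gen -> F') f g : model v -> sem v (addQ f g) = sem v f + sem v g.
Proof. by move=> hv; rewrite sem_mk // eval_cat. Qed.
Lemma sem_opp (F' : lmodType R^c) (v : gen -> F') f : model v -> sem v (oppQ f) = - sem v f.
Proof. by move=> hv; rewrite sem_mk // eval_opp. Qed.
Lemma sem_scale (F' : lmodType R^c) (v : gen -> F') r f : model v -> sem v (scaleQ r f) = r *: sem v f.
Proof. by move=> hv; rewrite sem_mk // eval_scale. Qed.

Lemma addQA : associative addQ.
Proof. by move=> f g h; apply: FQ_ext => F' v hv; rewrite !sem_add // addrA. Qed.
Lemma addQC : commutative addQ.
Proof. by move=> f g; apply: FQ_ext => F' v hv; rewrite !sem_add // addrC. Qed.
Lemma add0Q : left_id zeroQ addQ.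
Proof. by move=> f; apply: FQ_ext => F' v hv; rewrite !sem_add // sem_zero // add0r. Qed.
Lemma addNQ : left_inverse zeroQ oppQ addQ.
Proof.
by move=> f; apply: FQ_ext => F' v hv; rewrite !sem_add // sem_opp // sem_zero // addNr.
Qed.

HB.instance Definition _ := GRing.isZmodule.Build FQ addQA addQC add0Q addNQ.

Lemma scaleQA a b v : scaleQ a (scaleQ b v) = scaleQ (a * b) v.
Proof. by apply: FQ_ext => F' w hw; rewrite !sem_scale // scalerA. Qed.
Lemma scale1Q : left_id 1 scaleQ.
Proof. by move=> f; apply: FQ_ext => F' w hw; rewrite !sem_scale // scale1r. Qed.
Lemma scaleQDr : right_distributive scaleQ +%R.
Proof.
move=> r f g; apply: FQ_ext => F' w hw.
by rewrite /= !sem_add // !sem_scale // sem_add // scalerDr.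
Qed.
Lemma scaleQDl v : {morph scaleQ^~ v: a b / a + b}.
Proof.
move=> a b; apply: FQ_ext => F' w hw.
by rewrite /= !sem_add // !sem_scale // scalerDl.
Qed.

HB.instance Definition _ := GRing.Zmodule_isLmodule.Build R^c FQ scaleQA scale1Q
  scaleQDr scaleQDl.


Lemma eval_single (F' : lmodType R^c) (v : gen -> F') g : eval v [:: (1, g)] = v g.
Proof. by rewrite /eval big_seq1 scale1r. Qed.

Lemma sem_sum (F' : lmodType R^c) (v : gen -> F') I (r : seq I) (Fs : I -> FQ) :
  model v -> sem v (\sum_(i <- r) Fs i) = \sum_(i <- r) sem v (Fs i).
Proof.
move=> hv; apply: (big_morph (sem v)) => [f g|]; first exact: sem_add.
exact: sem_zero.
Qed.

Definition phiQ (x : M) : FQ := mk [:: (1, GM x)].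
Lemma phiQ_lin : linear_for *:%R phiQ.
Proof.
move=> r x y; apply: FQ_ext => F' v hv; rewrite /phiQ.
have [h1 h2 _] := hv.
by rewrite sem_add // sem_scale // !sem_mk // !eval_single h1 h2.
Qed.
HB.instance Definition _ := GRing.isLinear.Build R^c M FQ *:%R phiQ phiQ_lin.

Section Univ.
Variables (F' : lmodType R^c) (hF' : n_X_flat X m.+1 F') (phi' : {linear M -> F'}).

Lemma wit_ex a b c (A : 'M[R]_(a, b)) (B : 'M[R]_(c, a)) (xs : 'I_a -> F') :
  exists y : 'I_c -> F',
    (valid A B /\ (forall j, \sum_l ((A l j : R^c) *: xs l) = 0)) ->
    forall l, xs l = \sum_u ((B u l : R^c) *: y u).
Proof.
case: (pselect (valid A B /\ (forall j, \sum_l ((A l j : R^c) *: xs l) = 0))).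
  by move=> [hv hc]; have [y hy] := hv F' hF' xs hc; exists y.
by move=> hn; exists (fun _ => 0) => h; case: (hn h).
Qed.

Definition wit a b c (A : 'M[R]_(a, b)) (B : 'M[R]_(c, a)) (xs : 'I_a -> F') :
  'I_c -> F' := sval (cid (wit_ex A B xs)).

Definition evl_with (f : gen -> F') := fix ev (t : term) : F' :=
  match t with
  | [::] => 0
  | p :: t' => let: (r, g) := p in r *: f g + ev t'
  end.

Fixpoint vF (g : gen) : F' :=
  match g with
  | GM x => phi' x
  | GW a b c A B xs u => wit A B (fun l => evl_with vF (xs l)) u
  end.

Lemma evlE t : eval vF t = evl_with vF t.
Proof.
elim: t => [|[r g] t IH]; first by rewrite /eval big_nil.
by rewrite /eval big_cons /=; congr (_ + _); exact: IH.
Qed.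

Lemma model_vF : model vF.
Proof.
split.
- by move=> x y /=; rewrite linearD.
- by move=> r x /=; rewrite linearZ.
move=> a b c A B xs hv hc l /=.
have := svalP (cid (wit_ex A B (fun l => evl_with vF (xs l)))).
rewrite evlE => -> //; split => // j.
by under eq_bigr do rewrite -evlE; exact: hc j.
Qed.

Definition fQ (f : FQ) : F' := sem vF f.
Lemma fQ_lin : linear_for *:%R fQ.
Proof.
by move=> r f g; rewrite /fQ sem_add ?sem_scale //; exact: model_vF.
Qed.
HB.instance Definition _ := GRing.isLinear.Build R^c FQ F' *:%R fQ fQ_lin.

Lemma univQ x : phi' x = fQ (phiQ x).
Proof. by rewrite /fQ /phiQ sem_mk ?eval_single //; exact: model_vF. Qed.

End Univ.

Lemma flatQ : left_n_X_coherent X m.+1 -> n_X_flat X m.+1 FQ.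
Proof.
move=> hcoh N P hN; rewrite /Tor_vanishes /= => x hx.
have [Q] : n_presented N m.+2 by apply: hcoh.2; split => //; constructor.
have [c [B hB]] := compare_fg P Q.
have hval : valid (pres_A P m) B.
  move=> F'' hF'' y hy.
  have := hF'' N P hN; rewrite /Tor_vanishes /= => /(_ y hy) [s [hs1 hs2]].
  have exW : forall v : 'rV[R]_(pres_k P m.+1), exists w : 'rV[R]_c,
      v *m pres_A P m = 0 -> v = w *m B.
    move=> v; case: (pselect (v *m pres_A P m = 0)) => [h|h].
      by have [w hw] := (hB v).1 h; exists w.
    by exists 0 => h'; case: (h h').
  pose W v := sval (cid (exW v)).
  exists (fun u => \sum_(t <- s) ((W t.2 0 u : R^c) *: t.1)) => l.
  rewrite hs2.
  under [RHS]eq_bigr do rewrite scaler_sumr.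
  rewrite exchange_big /=; apply: eq_big_seq => t ts.
  under eq_bigr do rewrite scalerA.
  rewrite -scaler_suml; congr (_ *: _).
  have ht := svalP (cid (exW t.2)) (hs1 t ts).
  rewrite {1}ht mxE; apply: eq_bigr => u _; done.
pose xs := fun l => rep (x l).
pose wg u : FQ := mk [:: (1, GW (pres_A P m) B xs u)].
have key : forall l, x l = \sum_u ((B u l : R^c) *: wg u).
  move=> l; apply: FQ_ext => F' v hv.
  rewrite sem_sum //.
  under [RHS]eq_bigr do rewrite sem_scale // sem_mk // eval_single.
  have [_ _ h3] := hv.
  apply: (h3 _ _ _ _ _ xs hval) => j.
  apply: (etrans _ (sem_zero hv)); rewrite -[zeroQ](hx j) sem_sum //.
  by apply: eq_bigr => l' _; rewrite sem_scale.
exists [seq (wg u, row u B) | u <- index_enum 'I_c]; split.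
  move=> t /mapP [u _ ht]; rewrite ht /=.
  by apply/(hB _).2; exists (delta_mx 0 u); rewrite -rowE.
move=> l; rewrite big_map key; apply: eq_bigr => u _; by rewrite mxE.
Qed.

End TermModel.

Unset Implicit Arguments.

Theorem theorem2p16 (R : pzRingType) (X : lmodType R -> Prop) (n : nat) :
  (1 <= n)%N ->
  (exists N : lmodType R, in_Xn X n N) ->
  (left_n_X_coherent X n <->
   forall M : lmodType R^c, has_n_X_flat_preenvelope X n M).
Proof.
case: n => [//|m] _ hex; split.
  move=> hcoh M.
  exists (FQ X m M); exists (GRing.Linear.clone _ _ _ _ (@phiQ R X m M) _); split.
    exact: flatQ.
  move=> F' phi' hF'.
  exists (GRing.Linear.clone _ _ _ _ (fQ hF' phi') _) => x.
  exact: univQ.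
move=> H; split => // N [hN [P]].
exact: (back_main P hN H).
Qed.
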